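(* Let $d,n\in\mathbb{N}$, $W\in M_n(\mathbb{Z}_d)$, $\Omega=W-W^T$, $R$ a commutative ring, $\omega\in R$ such that $m\mapsto\omega^m$ is an embedding $\zeta:\mathbb{Z}_d\to R^\times$, $A\le R^\times$ a subgroup with $\omega\in A$, $M$ an associative $R$-algebra, and $\tau:\mathbb{Z}_d^n\to M$ such that $\mu:\mathcal{G}_d^n(A,\zeta,W)\to M$, $\mu(a,p,x)=a\,\omega^p\tau(x)$, is an injective multiplicative homomorphism. Then for all $(a,p,x),(b,q,y)\in\mathcal{G}_d^n(A,\zeta,W)$, $$\mu(a,p,x)\mu(b,q,y)\mu(a,p,x)^{-1}\mu(b,q,y)^{-1}=\omega^{x^T\Omega y},$$ and $$\mu(a,p,x)\mu(b,q,y)-\mu(b,q,y)\mu(a,p,x)=\big(1-\omega^{-x^T\Omega y}\big)\mu(a,p,x)\mu(b,q,y).$$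
   Context: $R^\times$ is the group of units of $R$. Let $F\subseteq A$ be a fixed set of representatives of $A/\zeta(\mathbb{Z}_d)$ with $1\in F$, and $r:A\to F$, $u:A\to\mathbb{Z}_d$ the maps with $a=r(a)\omega^{u(a)}$. The polar commutator group $\mathcal{G}_d^n(A,\zeta,W)$ is the set $F\times\mathbb{Z}_d\times\mathbb{Z}_d^n$ with multiplication $(a,p,x)\cdot(b,q,y)=(r(ab),\,u(ab)+p+q+x^TWy,\,x+y)$. *)

(* Defs.v *)
From HB Require Import structures.
From mathcomp Require Import all_boot all_order all_algebra.
Set Implicit Arguments. Unset Strict Implicit. Unset Printing Implicit Defensive.
Import GRing.Theory.
Local Open Scope ring_scope.

(* Elements of the polar commutator group G_d^n(A, zeta, W) are triples
   (a, p, x) with a \in F, p : 'Z_d, x : 'cV['Z_d]_n. *)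
Definition pcg_elt (R : Type) (d n : nat) := (R * 'Z_d * 'cV['Z_d]_n)%type.

Definition bilin (d n : nat) (x : 'cV['Z_d]_n) (W : 'M['Z_d]_n) (y : 'cV['Z_d]_n)
  : 'Z_d := (x^T *m W *m y) ord0 ord0.

Definition pcg_mul (R : pzRingType) (d n : nat) (r : R -> R) (u : R -> 'Z_d)
  (W : 'M['Z_d]_n) (g h : pcg_elt R d n) : pcg_elt R d n :=
  let: (a, p, x) := g in let: (b, q, y) := h in
  (r (a * b), u (a * b) + p + q + bilin x W y, x + y).

Definition pcg_mu (R : comPzRingType) (M : lalgType R) (d n : nat) (omega : R)
  (tau : 'cV['Z_d]_n -> M) (g : pcg_elt R d n) : M :=
  let: (a, p, x) := g in (a * omega ^+ p) *: tau x.

(* Main.v *)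
Require Import Defs.
From HB Require Import structures.
From mathcomp Require Import all_boot all_order all_algebra.
Import GRing.Theory.
Local Open Scope ring_scope.
From mathcomp Require Import ring.

Lemma bilinT (d n : nat) (x y : 'cV['Z_d]_n) (W : 'M['Z_d]_n) :
  bilin x (W - W^T) y = bilin x W y - bilin y W x.
Proof.
have H : x^T *m W^T *m y = (y^T *m W *m x)^T by rewrite !trmx_mul trmxK mulmxA.
by rewrite /bilin mulmxBr mulmxBl H !mxE.
Qed.

Lemma bilinN (d n : nat) (x y : 'cV['Z_d]_n) (W : 'M['Z_d]_n) :
  bilin (- x) W y = bilin x W (- y).
Proof.
by rewrite /bilin linearN /= mulNmx mulNmx mulmxN !mxE.
Qed.

Lemma aux1 (V : comPzRingType) (U P B : V) : U + - (U + P + B) + P + B = 0.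
Proof. ring. Qed.
Lemma aux2 (V : comPzRingType) (U P B : V) : U + P + - (U + P + B) + B = 0.
Proof. ring. Qed.

Lemma final (K : comPzRingType) (N : lalgType K) (G H : N) (c : K) :
  H * G = c *: (G * H) -> G * H - H * G = (1 - c) *: (G * H).
Proof. by move=> ->; rewrite scalerBl scale1r. Qed.

Lemma comm_final (K : comUnitRingType) (N : unitAlgType K) (G H : N) (c : K) :
  G \is a GRing.unit -> H \is a GRing.unit ->
  G * H = c *: (H * G) -> G * H * G^-1 * H^-1 = c%:A.
Proof.
by move=> ug uh ->; rewrite -!scalerAl (mulrK ug) divrr.
Qed.

Theorem proposition24 (d n : nat) (hd : (1 < d)%N) (W : 'M['Z_d]_n)
  (R : comUnitRingType) (omega : R)
  (* zeta : Z_d -> R^x, m |-> omega^m, is a (well-defined) embedding *)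
  (homega_d : omega ^+ d = 1)
  (hzeta_inj : injective (fun m : 'Z_d => omega ^+ m))
  (* A is a subgroup of R^x containing omega *)
  (A : pred R)
  (hA_unit : forall a, a \in A -> a \is a GRing.unit)
  (hA1 : 1 \in A)
  (hAM : forall a b, a \in A -> b \in A -> a * b \in A)
  (hAV : forall a, a \in A -> a^-1 \in A)
  (homegaA : omega \in A)
  (* F : set of representatives of A / zeta(Z_d) with 1 \in F *)
  (F : pred R)
  (hFA : forall f, f \in F -> f \in A)
  (hF1 : 1 \in F)
  (hFrep : forall f g (m k : 'Z_d), f \in F -> g \in F ->
             f * omega ^+ m = g * omega ^+ k -> f = g)
  (* r, u with a = r(a) omega^(u(a)) *)
  (r : R -> R) (u : R -> 'Z_d)
  (hrF : forall a, a \in A -> r a \in F)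
  (hru : forall a, a \in A -> a = r a * omega ^+ u a)
  (M : unitAlgType R) (tau : 'cV['Z_d]_n -> M)
  (* mu is an injective multiplicative homomorphism *)
  (hmu_mul : forall g h : pcg_elt R d n, g.1.1 \in F -> h.1.1 \in F ->
     pcg_mu omega tau (pcg_mul r u W g h) = pcg_mu omega tau g * pcg_mu omega tau h)
  (hmu_one : pcg_mu omega tau (1, 0, 0) = 1)
  (hmu_inj : forall g h : pcg_elt R d n, g.1.1 \in F -> h.1.1 \in F ->
     pcg_mu omega tau g = pcg_mu omega tau h -> g = h) :
  forall (a : R) (p : 'Z_d) (x : 'cV['Z_d]_n) (b : R) (q : 'Z_d) (y : 'cV['Z_d]_n),
    a \in F -> b \in F ->
    let Omega := W - W^T in
    let mg := pcg_mu omega tau (a, p, x) in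
    let mh := pcg_mu omega tau (b, q, y) in
    mg * mh * mg^-1 * mh^-1 = (omega ^+ bilin x Omega y)%:A /\
    mg * mh - mh * mg = (1 - omega ^+ (- bilin x Omega y)) *: (mg * mh).
Proof.
move=> a p x b q y haF hbF Omega mg mh; rewrite /mg /mh /Omega => {mg mh Omega}.
have expD : forall i j : 'Z_d, omega ^+ (i + j)%R = omega ^+ i * omega ^+ j.
  move=> i j; rewrite -exprD /=.
  rewrite [in RHS](divn_eq (i + j) (Zp_trunc d).+2) exprD mulnC exprM.
  have hm : omega ^+ (Zp_trunc d).+2 = 1 by rewrite (Zp_cast hd).
  by rewrite hm expr1n mul1r.
have exp0 : omega ^+ (0%R : 'Z_d) = 1 by rewrite expr0.
have comm : forall a p x b q y, a \in F -> b \in F ->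
   pcg_mu omega tau (a, p, x) * pcg_mu omega tau (b, q, y) =
   omega ^+ (bilin x (W - W^T) y) *: (pcg_mu omega tau (b, q, y) * pcg_mu omega tau (a, p, x)).
  move=> a1 p1 x1 b1 q1 y1 ha1 hb1.
  rewrite -!hmu_mul // /pcg_mul /pcg_mu (mulrC b1 a1) (addrC y1 x1) bilinT scalerA; congr (_ *: _).
  have -> : u (a1 * b1) + p1 + q1 + bilin x1 W y1 =
    (u (a1 * b1) + q1 + p1 + bilin y1 W x1) + (bilin x1 W y1 - bilin y1 W x1).
    by rewrite [bilin x1 W y1 - _]addrC addrA addrK (addrAC _ q1 p1).
  by rewrite [in LHS]expD mulrA [LHS]mulrC.
have unit : forall a p x, a \in F -> pcg_mu omega tau (a, p, x) \is a GRing.unit.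
  move=> a1 p1 x1 ha1.
  have haA := hFA _ ha1.
  have haiA := hAV _ haA.
  pose a' := r a1^-1.
  have ha'F : a' \in F by apply: hrF.
  have hi : a1^-1 = a' * omega ^+ u a1^-1 by apply: hru.
  have haa'A : a1 * a' \in A by apply: hAM => //; apply: hFA.
  have r1 : r (a1 * a') = 1.
    apply: (hFrep _ _ (u (a1 * a') + u a1^-1) 0%R (hrF _ haa'A) hF1).
    rewrite exp0 mulr1 expD mulrA -hru // -mulrA -hi mulrV //; exact: hA_unit.
  apply/unitrP; exists (pcg_mu omega tau (a', - (u (a1 * a') + p1 + bilin x1 W (- x1)), - x1)).
  split.
  - rewrite -hmu_mul // -hmu_one /pcg_mul (mulrC a' a1) r1 addNr.
    congr (pcg_mu _ _ (_, _, _)). rewrite bilinN; exact: aux1.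
  - rewrite -hmu_mul // -hmu_one /pcg_mul r1 addrN.
    congr (pcg_mu _ _ (_, _, _)); exact: aux2.
have ug := unit a p x haF; have uh := unit b q y hbF.
split.
  apply: comm_final; [exact: ug | exact: uh | exact: comm].
have E : pcg_mu omega tau (b, q, y) * pcg_mu omega tau (a, p, x) =
   omega ^+ (- bilin x (W - W^T) y) *: (pcg_mu omega tau (a, p, x) * pcg_mu omega tau (b, q, y)).
  by rewrite [in RHS]comm // scalerA -expD addNr exp0 scale1r.
apply: final; exact: E.
Qed.
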